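(* Let $\mathcal{F}$ be the infinite rooted tree with root $\delta$ in which every vertex has $p\ge2$ children, and let $a$ be an integral weight function on $\mathcal{F}$ with weight $\omega_a$. Then $a(\delta)\ge\widehat\gamma_0(\omega_a)$.
   Context: An integral weight function with weight $\omega$ (nonnegative integer) is a map $a:V(\mathcal{F})\to\mathbb{Z}_{\ge0}$ such that every infinite path $T$ from the root satisfies $\sum_{v\in T}a(v)\ge\omega$, and $a(v)\ge\sum_{u\text{ child of }v}a(u)$ for every vertex $v$. $\widehat\gamma(\omega)$ is the lexicographically smallest sequence $(\gamma_i)_{i\ge0}$ of nonnegative integers with $\gamma_i\ge p\gamma_{i+1}$ and $\sum_i\gamma_i=\omega$. *)

(* Defs.v *)
From mathcomp Require Import all_boot.
Set Implicit Arguments. Unset Strict Implicit. Unset Printing Implicit Defensive.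

(* The infinite rooted p-ary tree F: vertices are finite words over 'I_p,
   the root delta is the empty word [::], and the children of v are
   rcons v i for i : 'I_p. *)
Definition vertex (p : nat) := seq 'I_p.
Definition tree_root (p : nat) : vertex p := [::].
Definition child (p : nat) (v : vertex p) (i : 'I_p) : vertex p := rcons v i.

(* An infinite path from the root is determined by a choice function
   f : nat -> 'I_p; its vertex at depth n is the word f 0 ... f (n-1). *)
Definition path_vertex (p : nat) (f : nat -> 'I_p) (n : nat) : vertex p :=
  [seq f i | i <- iota 0 n].

(* Integral weight function with weight omega (values in nat). The sum over
   an infinite path of nonnegative integers is >= omega iff some partial sum is. *)
Definition integral_weight_function (p : nat) (a : vertex p -> nat) (omega : nat) :
  Prop :=
  (forall f : nat -> 'I_p, exists n, omega <= \sum_(k < n) a (path_vertex f k)) /\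
  (forall v : vertex p, \sum_(i < p) a (child v i) <= a v).

Definition admissible (p omega : nat) (g : nat -> nat) : Prop :=
  (forall i, p * g i.+1 <= g i) /\
  exists N, (forall i, N <= i -> g i = 0) /\ \sum_(i < N) g i = omega.

Definition lex_lt (g h : nat -> nat) : Prop :=
  exists k, (forall i, i < k -> g i = h i) /\ g k < h k.

Definition is_gamma_hat (p omega : nat) (g : nat -> nat) : Prop :=
  admissible p omega g /\
  forall h, admissible p omega h -> h = g \/ lex_lt g h.

(* Main.v *)
Require Import Defs.
From mathcomp Require Import all_boot.

Lemma trunc_adm (p : nat) : forall N (x : nat -> nat) (omega : nat),
  (forall i, p * x i.+1 <= x i) -> omega <= \sum_(i < N) x i ->
  exists h, admissible p omega h /\ h 0 <= x 0.
Proof.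
elim=> [|N IH] x omega hx hs.
  rewrite big_ord0 leqn0 in hs; move/eqP: hs => ->.
  exists (fun _ => 0); split=> //; split=> // ; first by move=> i; rewrite muln0.
  by exists 0; split=> //; rewrite big_ord0.
case: (leqP omega (x 0)) => h0.
  exists (fun i => if i is 0 then omega else 0); split=> //; split.
    by case=> [|i] /=; rewrite muln0.
  by exists 1; split; [case | rewrite big_ord1].
rewrite big_ord_recl /= in hs.
have hs' : omega - x 0 <= \sum_(i < N) x i.+1.
  by rewrite leq_subLR.
have [h [[hh [M [hM hMs]]] h0']] := IH (fun i => x i.+1) (omega - x 0) (fun i => hx i.+1) hs'.
exists (fun i => if i is i'.+1 then h i' else x 0); split=> //; split.
  case=> [|i] //=; apply: leq_trans (hx 0); by rewrite leq_mul2l h0' orbT.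
exists M.+1; split; first by case=> // i /= ?; apply: hM.
rewrite big_ord_recl /= hMs subnKC //; exact: ltnW.
Qed.

Theorem mainTheorem10 (p : nat) (hp : 2 <= p) (a : vertex p -> nat) (omega : nat)
  (ha : integral_weight_function a omega)
  (g : nat -> nat) (hg : is_gamma_hat p omega g) :
  g 0 <= a (tree_root p).
Proof.
have p0 : 0 < p by apply: leq_trans hp.
pose i0 : 'I_p := Ordinal p0.
pose c (v : vertex p) := [arg min_(i < i0) a (child v i)].
have hc : forall v j, a (child v (c v)) <= a (child v j).
  move=> v j; rewrite /c; case: arg_minnP => // i _ H; exact: H.
have hcp : forall v, p * a (child v (c v)) <= a v.
  move=> v; apply: leq_trans (ha.2 v).
  have -> : p * a (child v (c v)) = \sum_(i < p) a (child v (c v)).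
    by rewrite sum_nat_const card_ord.
  by apply: leq_sum => i _; apply: hc.
pose fix vv n := if n is n'.+1 then rcons (vv n') (c (vv n')) else [::].
pose f n := c (vv n).
have hpv : forall k, path_vertex f k = vv k.
  elim=> [|k IH] //; rewrite /path_vertex -addn1 iotaD map_cat /= cats1.
  by rewrite -/(path_vertex f k) IH add0n addn1.
have [N hN] := ha.1 f.
have [h [hadm h0]] : exists h, admissible p omega h /\ h 0 <= a (vv 0).
  apply: (@trunc_adm p N (fun k => a (vv k))) => [i|]; first exact: hcp.
  by apply: leq_trans hN _; rewrite leq_eqVlt; apply/orP; left; apply/eqP;
     apply: eq_bigr => i _; rewrite hpv.
case: (hg.2 h hadm) => [<- //|[k [hk1 hk2]]].
case: k hk1 hk2 => [|k] hk1 hk2.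
  exact: leq_trans (ltnW hk2) h0.
by rewrite hk1.
Qed.
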